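(* Let $(X,x)$ be a pointed diffeological space. Assume that there exists a local generating set $G$ of $X$ at $x$ with the property that for any $q:U\to X$ in $G$, if $f:V\to U$ is a smooth map from an open subset $V$ of some $\mathbb{R}^n$ such that $q\circ f$ is the constant map at $x$, then $f$ is locally constant. Then $T_x^{dvs}(X)$ is a fine diffeological vector space.
   Context: A diffeological space is a set with, for every open subset $U$ of every $\mathbb{R}^n$, a set of maps $U\to X$ called plots, containing constants, closed under precomposition with smooth maps, and satisfying the sheaf condition; smooth maps send plots to plots. Let $\mathcal{G}(X,x)$ be the category whose objects are plots $p:U\to X$ with $U$ a connected open neighbourhood of $0$ in some $\mathbb{R}^n$ and $p(0)=x$, with morphisms $p\to q$ ($q:V\to X$) the germs at $0$ of smooth maps $f$ from an open neighbourhood $W$ of $0$ in $U$ to $V$ with $f(0)=0$ and $p|_W=q\circ f$. A local generating set of $X$ at $x$ is a set $G$ of objects of $\mathcal{G}(X,x)$ such that every object admits a morphism to some element of $G$. The internal tangent space $T_x(X)$ is the colimit in real vector spaces of $p\mapsto T_0(U)$, $[f]\mapsto f_*$ over $\mathcal{G}(X,x)$; $TX=\coprod_xT_x(X)$. For a plot $f:U\to X$ with $U$ connected, $Tf:TU\to TX$ sends $T_u(U)$ into $T_{f(u)}(X)$ via $T_u(U)\cong T_0(U-u)\to T_{f(u)}(X)$ induced by $w\mapsto f(w+u)$. Hector's diffeology on $TX$ is generated by all such $Tf$. A diffeological vector space over $X$ is a smooth map $V\to X$ with vector space structures on fibres such that fibrewise addition, scalar multiplication and zero section are smooth. The dvs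 diffeology is the smallest diffeology on $TX$ containing Hector's diffeology making $TX\to X$ a diffeological vector space over $X$, and $T_x^{dvs}(X)$ is $T_x(X)$ with the sub-diffeology. A diffeological vector space is a vector space with a diffeology making addition and scalar multiplication smooth; the fine diffeology on a vector space is the smallest such diffeology, and a diffeological vector space is fine if it has this diffeology. *)

(* Defs.v *)
From mathcomp Require Import all_boot all_algebra all_classical all_reals all_analysis.
Import numFieldNormedType.Exports.
Import GRing.Theory.
Set Implicit Arguments. Unset Strict Implicit. Unset Printing Implicit Defensive.
Local Open Scope classical_set_scope.
Local Open Scope ring_scope.

Fixpoint iderive (R : realType) (m : nat) (W : normedModType R)
    (vs : seq 'rV[R]_m) (f : 'rV[R]_m -> W) : 'rV[R]_m -> W :=
  match vs with
  | [::] => f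
  | v :: vs' => fun x => derive (iderive vs' f) x v
  end.

Definition smooth_on (R : realType) (m : nat) (W : normedModType R)
    (V : set 'rV[R]_m) (f : 'rV[R]_m -> W) : Prop :=
  forall (vs : seq 'rV[R]_m) (x : 'rV[R]_m), V x -> differentiable (iderive vs f) x.

(* A (pre)diffeology on X: for every n and every subset U of R^n, a predicate
   on parametrizations U -> X (represented as total maps, only values on U matter). *)
Definition pdiff (R : realType) (X : Type) :=
  forall n : nat, set 'rV[R]_n -> ('rV[R]_n -> X) -> Prop.

Definition is_diffeology (R : realType) (X : Type) (D : pdiff R X) : Prop :=
  (forall n U p, D n U p -> open U) /\
  (forall n U (p q : 'rV[R]_n -> X), D n U p -> {in U, p =1 q} -> D n U q) /\
  (forall n (U : set 'rV[R]_n) (c : X), open U -> D n U (fun _ => c)) /\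
  (forall n m (U : set 'rV[R]_n) (V : set 'rV[R]_m) p (f : 'rV[R]_m -> 'rV[R]_n),
      D n U p -> open V -> smooth_on V f -> f @` V `<=` U -> D m V (p \o f)) /\
  (forall n (U : set 'rV[R]_n) p, open U ->
      (forall u, U u -> exists W : set 'rV[R]_n, [/\ open W, W u, W `<=` U & D n W p]) ->
      D n U p).

Record gobj (R : realType) (X : Type) := GObj {
  gdim : nat;
  gdom : set 'rV[R]_gdim;
  gmap : 'rV[R]_gdim -> X }.
Arguments gdim {R X} g.
Arguments gdom {R X} g.
Arguments gmap {R X} g.

Definition is_gobj (R : realType) (X : Type) (D : pdiff R X) (x : X) (o : gobj R X) :=
  [/\ open (gdom o), connected (gdom o), gdom o 0, D _ (gdom o) (gmap o) & gmap o 0 = x].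

(* f (defined on the open neighbourhood W of 0 in U) represents a morphism p -> q *)
Definition is_ghom (R : realType) (X : Type) (p q : gobj R X)
    (W : set 'rV[R]_(gdim p)) (f : 'rV[R]_(gdim p) -> 'rV[R]_(gdim q)) :=
  open W /\ W 0 /\ W `<=` gdom p /\ smooth_on W f /\
  f 0 = 0 /\ f @` W `<=` gdom q /\ (forall w, W w -> gmap p w = gmap q (f w)).
Arguments is_ghom {R X} p q W f.

Definition is_linear_map (R : realType) (U V : lmodType R) (h : U -> V) :=
  forall (a : R) (u v : U), h (a *: u + v) = a *: h u + h v.

(* kappa is a cocone (in real vector spaces) over the functor
   p |-> T_0(U) = R^n, [f] |-> f_* = Df(0) *)
Definition is_gcocone (R : realType) (X : Type) (D : pdiff R X) (x : X)
    (V : lmodType R) (kappa : forall o : gobj R X, 'rV[R]_(gdim o) -> V) :=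
  (forall o, is_gobj D x o -> is_linear_map (kappa o)) /\
  (forall p q W f, is_gobj D x p -> is_gobj D x q -> is_ghom p q W f ->
     forall v, kappa q ('D_v f 0) = kappa p v).

Definition is_internal_tangent (R : realType) (X : Type) (D : pdiff R X) (x : X)
    (V : lmodType R) (iota : forall o : gobj R X, 'rV[R]_(gdim o) -> V) :=
  is_gcocone D x iota /\
  forall (W : lmodType R) (kappa : forall o : gobj R X, 'rV[R]_(gdim o) -> W),
    is_gcocone D x kappa ->
    (exists h : V -> W, is_linear_map h /\
        forall o, is_gobj D x o -> forall v, h (iota o v) = kappa o v) /\
    (forall h1 h2 : V -> W, is_linear_map h1 -> is_linear_map h2 ->
        (forall o, is_gobj D x o -> forall v, h1 (iota o v) = kappa o v) ->
        (forall o, is_gobj D x o -> forall v, h2 (iota o v) = kappa o v) ->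
        h1 =1 h2).

Definition tbundle (R : realType) (X : Type) (T : X -> lmodType R) := {y : X & T y}.

(* fibrewise addition (only meaningful on the fibred product TX x_X TX) *)
Definition tadd (R : realType) (X : Type) (T : X -> lmodType R)
    (s t : tbundle T) : tbundle T :=
  match pselect (projT1 t = projT1 s) with
  | left e => existT T (projT1 s) (projT2 s + eq_rect _ T (projT2 t) _ e)
  | right _ => s
  end.

Definition tscale (R : realType) (X : Type) (T : X -> lmodType R)
    (r : R) (s : tbundle T) : tbundle T :=
  existT T (projT1 s) (r *: projT2 s).

Definition shift_obj (R : realType) (X : Type) (n : nat)
    (U : set 'rV[R]_n) (f : 'rV[R]_n -> X) (u : 'rV[R]_n) : gobj R X :=
  @GObj R X n [set w | U (w + u)] (fun w => f (w + u)).

Definition tmap (R : realType) (X : Type) (T : X -> lmodType R)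
    (iota : forall y : X, forall o : gobj R X, 'rV[R]_(gdim o) -> T y)
    (n : nat) (U : set 'rV[R]_n) (f : 'rV[R]_n -> X)
    (u v : 'rV[R]_n) : tbundle T :=
  existT T (f u) (iota (f u) (shift_obj U f u) v).

(* E contains Hector's diffeology, i.e. every Tf (f a plot on a connected U)
   is smooth from TU (with its standard diffeology) to (TX, E) *)
Definition contains_hector (R : realType) (X : Type) (D : pdiff R X)
    (T : X -> lmodType R)
    (iota : forall y : X, forall o : gobj R X, 'rV[R]_(gdim o) -> T y)
    (E : pdiff R (tbundle T)) : Prop :=
  forall n (U : set 'rV[R]_n) (f : 'rV[R]_n -> X),
    open U -> connected U -> D n U f ->
    forall k (V : set 'rV[R]_k) (a b : 'rV[R]_k -> 'rV[R]_n),
      open V -> smooth_on V a -> smooth_on V b -> a @` V `<=` U ->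
      E k V (fun w => tmap iota U f (a w) (b w)).

Definition is_dvs_over (R : realType) (X : Type) (D : pdiff R X)
    (T : X -> lmodType R) (E : pdiff R (tbundle T)) : Prop :=
  [/\ is_diffeology E,
      (forall n U P, E n U P -> D n U (fun u => projT1 (P u))),
      (* fibrewise addition smooth on TX x_X TX (subset of product diffeology) *)
      (forall n U P1 P2, E n U P1 -> E n U P2 ->
          (forall u, U u -> projT1 (P1 u) = projT1 (P2 u)) ->
          E n U (fun u => tadd (P1 u) (P2 u))),
      (forall n U (r : 'rV[R]_n -> R) P, smooth_on U r -> E n U P ->
          E n U (fun u => tscale (r u) (P u))) &
      (forall n U p, D n U p -> E n U (fun u => existT T (p u) 0))].

Definition dvs_plot (R : realType) (X : Type) (D : pdiff R X)
    (T : X -> lmodType R)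
    (iota : forall y : X, forall o : gobj R X, 'rV[R]_(gdim o) -> T y) :
    pdiff R (tbundle T) :=
  fun n U P => forall E : pdiff R (tbundle T),
    is_dvs_over D E -> contains_hector D iota E -> E n U P.

(* T_x^dvs(X): the fibre T_x(X) with the subset diffeology *)
Definition tdvs_plot (R : realType) (X : Type) (D : pdiff R X)
    (T : X -> lmodType R)
    (iota : forall y : X, forall o : gobj R X, 'rV[R]_(gdim o) -> T y)
    (x : X) : pdiff R (T x) :=
  fun n U Q => dvs_plot D iota U (fun u => existT T x (Q u)).

Definition is_vs_diffeology (R : realType) (V : lmodType R) (E : pdiff R V) : Prop :=
  [/\ is_diffeology E,
      (forall n U (P1 P2 : 'rV[R]_n -> V), E n U P1 -> E n U P2 ->
          E n U (fun u => P1 u + P2 u)) &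
      (forall n U (r : 'rV[R]_n -> R) (P : 'rV[R]_n -> V), smooth_on U r -> E n U P ->
          E n U (fun u => r u *: P u))].

Definition fine_plot (R : realType) (V : lmodType R) : pdiff R V :=
  fun n U Q => forall E : pdiff R V, is_vs_diffeology E -> E n U Q.

Definition is_fine (R : realType) (V : lmodType R) (E : pdiff R V) : Prop :=
  forall n U Q, E n U Q <-> @fine_plot R V n U Q.

Definition is_local_generating_set (R : realType) (X : Type) (D : pdiff R X) (x : X)
    (G : set (gobj R X)) : Prop :=
  (forall q, G q -> is_gobj D x q) /\
  (forall p, is_gobj D x p -> exists q, exists W f, G q /\ is_ghom p q W f).

Definition locally_constant_on (R : realType) (m : nat) (A : Type)
    (V : set 'rV[R]_m) (f : 'rV[R]_m -> A) : Prop :=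
  forall v, V v -> exists W : set 'rV[R]_m,
    [/\ open W, W v, W `<=` V & forall w, W w -> f w = f v].

(* Main.v *)
Require Import Defs.
From mathcomp Require Import all_boot all_algebra all_classical all_reals all_analysis.
From mathcomp Require Import all_order.
Import numFieldNormedType.Exports.
Import Order.TTheory GRing.Theory Num.Theory.
Local Open Scope classical_set_scope.
Local Open Scope ring_scope.

Section Calc.
Context {R : realType}.

Lemma near0_differentiable (V W : normedModType R) (h : V -> W) (x : V) :
  (\forall y \near x, h y = 0) -> differentiable h x.
Proof.
move=> hz.
have hx : h x = 0 by apply: (nbhs_singleton hz).
have key : h \o shift x = cst (h x) + \0 +o_ 0 id.
  apply/eqaddoP => eps eps0.
  have : \forall y \near (0:V), h (y + x) = 0.
    rewrite (near_shift x) /=.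
    move: hz; apply: filterS => z; move=> hz0 /=; by rewrite add0r subrK.
  apply: filterS => y /= hy; rewrite !fctE /= hy hx addr0 subr0 normr0; by rewrite mulr_ge0 // ltW.
have dh : 'd h x = (\0 : {linear V -> W}) :> (V -> W).
  apply: diff_unique => //; exact: cst_continuous.
apply/diff_locallyP; rewrite dh; split; first exact: cst_continuous.
exact: key.
Unshelve. all: by end_near. Qed.

Definition Dv {m} {W : normedModType R} (v : 'rV[R]_m) (f : 'rV[R]_m -> W) :=
  fun x => derive f x v.

Fixpoint Ck {m} {W : normedModType R} (k : nat) (V : set 'rV[R]_m)
    (f : 'rV[R]_m -> W) : Prop :=
  match k with
  | 0 => forall x, V x -> differentiable f x
  | k'.+1 => (forall x, V x -> differentiable f x) /\ forall v, Ck k' V (Dv v f)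
  end.

Lemma iderive_rcons {m} {W : normedModType R} (vs : seq 'rV[R]_m) v (f : 'rV[R]_m -> W) :
  iderive (rcons vs v) f = iderive vs (Dv v f).
Proof. by elim: vs => [|w vs IH] //=; rewrite IH. Qed.

Lemma CkP {m} {W : normedModType R} k (V : set 'rV[R]_m) (f : 'rV[R]_m -> W) :
  Ck k V f <-> (forall vs, (size vs <= k)%N -> forall x, V x -> differentiable (iderive vs f) x).
Proof.
elim: k f => [|k IH] f /=.
  split=> [H vs|H x Vx]; last exact: (H [::]).
  by case: vs => [|? ?] //= _ x Vx; apply: H.
split.
  move=> [H1 H2] vs; case/lastP: vs => [_|vs v]; first exact: H1.
  rewrite size_rcons ltnS iderive_rcons => Hs.
  exact: (proj1 (IH _) (H2 v)).
move=> H; split; first exact: (H [::]).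
move=> v; apply/IH => vs Hs x Vx; rewrite -iderive_rcons; apply: H => //.
by rewrite size_rcons ltnS.
Qed.

Lemma smoothP {m} {W : normedModType R} (V : set 'rV[R]_m) (f : 'rV[R]_m -> W) :
  smooth_on V f <-> forall k, Ck k V f.
Proof.
split=> [H k|H vs x Vx]; first by apply/CkP => vs _; exact: H.
by apply: (proj1 (CkP _ _ _) (H (size vs))).
Qed.

Lemma Ck_diff {m} {W : normedModType R} k (V : set 'rV[R]_m) (f : 'rV[R]_m -> W) x :
  Ck k V f -> V x -> differentiable f x.
Proof. by case: k => [|k] /= => [H|[H _]]; apply: H. Qed.

Lemma Ck_S {m} {W : normedModType R} k (V : set 'rV[R]_m) (f : 'rV[R]_m -> W) :
  Ck k.+1 V f -> Ck k V f.
Proof.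
move=> /CkP H; apply/CkP => vs Hs; apply: H; exact: leqW.
Qed.

Lemma Ck_le {m} {W : normedModType R} k k' (V : set 'rV[R]_m) (f : 'rV[R]_m -> W) :
  (k' <= k)%N -> Ck k V f -> Ck k' V f.
Proof.
move=> Hk /CkP H; apply/CkP => vs Hs; apply: H; exact: leq_trans Hk.
Qed.

Lemma Ck_sub {m} {W : normedModType R} k (V V' : set 'rV[R]_m) (f : 'rV[R]_m -> W) :
  V' `<=` V -> Ck k V f -> Ck k V' f.
Proof.
move=> HV /CkP H; apply/CkP => vs Hs x Vx; apply: H => //; exact: HV.
Qed.

Lemma near_eq_differentiable {V W : normedModType R} {f g : V -> W} {x} :
  (\forall y \near x, f y = g y) -> differentiable f x -> differentiable g x.
Proof.
move=> fg df.
have -> : g = f + (g - f) by apply/funext => y; rewrite !fctE addrC subrK.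
apply: differentiableD => //; apply: near0_differentiable.
by apply: filterS fg => y /= fgy; rewrite !fctE fgy subrr.
Qed.

Lemma open_near_eq {m} {W : Type} {V : set 'rV[R]_m} {f g : 'rV[R]_m -> W} {x} :
  open V -> (forall x, V x -> f x = g x) -> V x -> \forall y \near x, f y = g y.
Proof.
move=> oV fg Vx; have : nbhs x V by apply: open_nbhs_nbhs; split.
by apply: filterS => y /fg.
Qed.

Lemma Ck_loc {m} {W : normedModType R} {k} {V : set 'rV[R]_m} {f g : 'rV[R]_m -> W} :
  open V -> (forall x, V x -> f x = g x) -> Ck k V f -> Ck k V g.
Proof.
move=> oV fg; elim: k f g fg => [|k IH] f g fg /=.
  move=> H x Vx; apply: (near_eq_differentiable _ (H x Vx)).
  by move: (open_near_eq oV fg Vx); apply: filterS.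
move=> [H1 H2]; split.
  move=> x Vx; apply: (near_eq_differentiable _ (H1 x Vx)).
  by move: (open_near_eq oV fg Vx); apply: filterS.
move=> v; apply: (IH (Dv v f)) (H2 v) => x Vx; rewrite /Dv.
apply: near_eq_derive.
exact: (open_near_eq oV fg Vx).
Qed.


Lemma Ck_cst {m} {W : normedModType R} k (V : set 'rV[R]_m) (c : W) :
  Ck k V (fun _ => c).
Proof.
elim: k c => [|k IH] c /=; first by move=> x _; exact: differentiable_cst.
split; first by move=> x _; exact: differentiable_cst.
move=> v; have -> : Dv v (fun _ : 'rV[R]_m => c) = (fun _ => 0).
  by apply/funext => y; rewrite /Dv derive_cst.
exact: IH.
Qed.

Lemma Ck_id {m} k (V : set 'rV[R]_m) : Ck k V (fun x => x).
Proof.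
case: k => [|k] /=; first by move=> x _; exact: ex_diff.
split; first by move=> x _; exact: ex_diff.
move=> v; have -> : Dv v (fun x : 'rV[R]_m => x) = (fun _ => v).
  by apply/funext => y; rewrite /Dv derive_id.
exact: Ck_cst.
Qed.

Lemma Ck_add {m} {W : normedModType R} k (V : set 'rV[R]_m) (f g : 'rV[R]_m -> W) :
  open V -> Ck k V f -> Ck k V g -> Ck k V (fun x => f x + g x).
Proof.
move=> oV; elim: k f g => [|k IH] f g /=.
  by move=> Hf Hg x Vx; apply: (differentiableD (Hf x Vx) (Hg x Vx)).
move=> [Hf1 Hf2] [Hg1 Hg2]; split.
  by move=> x Vx; apply: (differentiableD (Hf1 x Vx) (Hg1 x Vx)).
move=> v; apply: (Ck_loc oV _ (IH _ _ (Hf2 v) (Hg2 v))) => x Vx; rewrite /Dv.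
symmetry; apply: (@deriveD _ _ _ f g x v); apply: diff_derivable; [exact: Hf1|exact: Hg1].
Qed.

Lemma Ck_mul {m} k (V : set 'rV[R]_m) (f g : 'rV[R]_m -> R) :
  open V -> Ck k V f -> Ck k V g -> Ck k V (fun x => f x * g x).
Proof.
move=> oV; elim: k f g => [|k IH] f g /=.
  by move=> Hf Hg x Vx; apply: (differentiableM (Hf x Vx) (Hg x Vx)).
move=> [Hf1 Hf2] [Hg1 Hg2]; split.
  by move=> x Vx; apply: (differentiableM (Hf1 x Vx) (Hg1 x Vx)).
have Hf : Ck k V f by apply: Ck_S; split.
have Hg : Ck k V g by apply: Ck_S; split.
move=> v.
have H : Ck k V (fun x => f x * Dv v g x + g x * Dv v f x).
  by apply: Ck_add => //; apply: IH.
apply: (Ck_loc oV _ H) => x Vx; rewrite /Dv.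
symmetry; apply: (@deriveM _ _ f g x v); apply: diff_derivable; [exact: Hf1|exact: Hg1].
Qed.

Lemma Ck_sum {m} {W : normedModType R} k (V : set 'rV[R]_m) n (F : 'I_n -> 'rV[R]_m -> W) :
  open V -> (forall i, Ck k V (F i)) -> Ck k V (fun x => \sum_(i < n) F i x).
Proof.
move=> oV; elim: n F => [|n IH] F HF.
  under eq_fun do rewrite big_ord0. exact: Ck_cst.
under eq_fun do rewrite big_ord_recr /=.
apply: Ck_add => //.
exact: (IH (fun i => F (widen_ord (leqnSn n) i))).
Qed.


Lemma derive_coord {m n} (g : 'rV[R]_m -> 'rV[R]_n) (j : 'I_n) x v :
  differentiable g x -> derive (fun y => g y 0 j) x v = (derive g x v) 0 j.
Proof.
move=> dg.
have @c : {linear 'rV[R]_n -> R}.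
  by exists (fun N : 'rV[R]_n => N 0 j); do 2![eexists]; do ?[constructor];
     rewrite ?mxE// => ? *; rewrite ?mxE//; move=> ?; rewrite !mxE.
have cc : continuous c by exact: coord_continuous.
have dc : forall y, differentiable c y by move=> y; exact: linear_differentiable.
rewrite (_ : (fun y => g y 0 j) = c \o g) //.
rewrite deriveE; last by apply: differentiable_comp.
rewrite diff_comp // diff_lin //= deriveE //.
Qed.

Lemma Ck_coord {m n} k (V : set 'rV[R]_m) (g : 'rV[R]_m -> 'rV[R]_n) (j : 'I_n) :
  open V -> Ck k V g -> Ck k V (fun x => g x 0 j).
Proof.
move=> oV; elim: k g => [|k IH] g /=.
  move=> H x Vx; exact: (differentiable_comp (H x Vx) (differentiable_coord _ 0 j)).
move=> [H1 H2]; split.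
  move=> x Vx; exact: (differentiable_comp (H1 x Vx) (differentiable_coord _ 0 j)).
move=> v; apply: (Ck_loc oV _ (IH _ (H2 v))) => x Vx; rewrite /Dv.
by rewrite derive_coord //; apply: H1.
Qed.

Lemma row_fun_sum {m n} (g : 'rV[R]_m -> 'rV[R]_n) :
  g = \sum_(j < n) (fun x => g x 0 j *: (delta_mx 0 j : 'rV[R]_n)).
Proof.
apply/funext => x; rewrite fct_sumE; exact: row_sum_delta.
Qed.

Lemma Ck_row {m n} k (V : set 'rV[R]_m) (g : 'rV[R]_m -> 'rV[R]_n) :
  open V -> (forall j, Ck k V (fun x => g x 0 j)) -> Ck k V g.
Proof.
move=> oV; elim: k g => [|k IH] g H.
  move=> x Vx; rewrite (row_fun_sum g); apply: differentiable_sum => j.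
  apply: differentiableZl; exact: (H j x Vx).
have dg : forall x, V x -> differentiable g x.
  move=> x Vx; rewrite (row_fun_sum g); apply: differentiable_sum => j.
  apply: differentiableZl; exact: (proj1 (H j) x Vx).
split => // v; apply: IH => j.
apply: (Ck_loc oV _ (proj2 (H j) v)) => x Vx; rewrite /Dv.
by rewrite derive_coord //; apply: dg.
Qed.


Lemma derive_decomp {n} {W : normedModType R} (f : 'rV[R]_n -> W) y u :
  differentiable f y ->
  derive f y u = \sum_(j < n) (u 0 j) *: derive f y (delta_mx 0 j).
Proof.
move=> df; rewrite deriveE // {1}(row_sum_delta u) linear_sum.
by apply: eq_bigr => j _; rewrite linearZ /= deriveE.
Qed.

Lemma derive_comp {m n} {W : normedModType R} (f : 'rV[R]_n -> W) (g : 'rV[R]_m -> 'rV[R]_n) x v :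
  differentiable g x -> differentiable f (g x) ->
  derive (f \o g) x v = derive f (g x) (derive g x v).
Proof.
move=> dg df; rewrite deriveE; last exact: differentiable_comp.
by rewrite diff_comp //= deriveE // deriveE.
Qed.

Lemma Ck_comp {m n k} {U : set 'rV[R]_n} {V : set 'rV[R]_m}
    {f : 'rV[R]_n -> R} {g : 'rV[R]_m -> 'rV[R]_n} :
  open V -> (forall x, V x -> U (g x)) -> Ck k U f -> Ck k V g -> Ck k V (f \o g).
Proof.
move=> oV gVU; elim: k f g gVU => [|k IH] f g gVU.
  by move=> Hf Hg x Vx; apply: differentiable_comp; [exact: Hg|apply: Hf; exact: gVU].
move=> [Hf1 Hf2] [Hg1 Hg2]; split.
  by move=> x Vx; apply: differentiable_comp; [exact: Hg1|apply: Hf1; exact: gVU].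
have Hg : Ck k V g by apply: Ck_S; split.
move=> v.
have H : Ck k V (fun x => \sum_(j < n) (Dv v g x 0 j) * (Dv (delta_mx 0 j) f \o g) x).
  apply: Ck_sum => // j; apply: Ck_mul => //.
    by apply: Ck_coord => //; apply: Hg2.
  by apply: IH => //; apply: Hf2.
apply: (Ck_loc oV _ H) => x Vx; rewrite /Dv.
rewrite (derive_comp f g x v); [|by apply: Hg1|by apply: Hf1; exact: gVU].
rewrite (derive_decomp f); last by apply: Hf1; exact: gVU.
by [].
Qed.

Lemma Ck_comp_row {m n p} k (U : set 'rV[R]_n) (V : set 'rV[R]_m)
    (f : 'rV[R]_n -> 'rV[R]_p) (g : 'rV[R]_m -> 'rV[R]_n) :
  open V -> open U -> (forall x, V x -> U (g x)) -> Ck k U f -> Ck k V g -> Ck k V (f \o g).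
Proof.
move=> oV oU gVU Hf Hg; apply: Ck_row => // j.
by apply: (Ck_comp (U := U) (f := fun y => f y 0 j)) => //; apply: Ck_coord.
Qed.


Lemma Ck_transl {m} k (V : set 'rV[R]_m) (c : 'rV[R]_m) :
  open V -> Ck k V (fun w => w + c).
Proof. by move=> oV; apply: Ck_add => //; [exact: Ck_id|exact: Ck_cst]. Qed.

Lemma transl_continuous {m} (c : 'rV[R]_m) : continuous (fun w : 'rV[R]_m => w + c).
Proof.
move=> w; apply: differentiable_continuous.
exact: (@Ck_diff _ _ 0 setT _ w (Ck_transl 0 setT c openT) I).
Qed.

Lemma open_transl {m} (U : set 'rV[R]_m) (c : 'rV[R]_m) : open U -> open [set w | U (w + c)].
Proof.
move=> oU; have := @open_comp _ _ (fun w : 'rV[R]_m => w + c) U.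
by apply => // w _; exact: transl_continuous.
Qed.

Lemma connected_transl {m} (U : set 'rV[R]_m) (c : 'rV[R]_m) : connected U -> connected [set w | U (w + c)].
Proof.
move=> cU.
have -> : [set w | U (w + c)] = (fun w : 'rV[R]_m => w + (- c)) @` U.
  apply/seteqP; split => w /=.
    by move=> Uw; exists (w + c) => //; rewrite addrK.
  by move=> [u Uu <-]; rewrite subrK.
apply: connected_continuous_connected => //.
apply: continuous_subspaceT; exact: transl_continuous.
Qed.

Lemma open_preim {m n} (V : set 'rV[R]_m) (W : set 'rV[R]_n) (c : 'rV[R]_m -> 'rV[R]_n) :
  open V -> open W -> (forall x, V x -> differentiable c x) -> open (V `&` c @^-1` W).
Proof.
move=> oV oW dc; rewrite openE => x [Vx Wcx].
rewrite /interior; apply: filterI.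
  by apply: open_nbhs_nbhs; split.
apply: (differentiable_continuous (dc x Vx)).
by apply: open_nbhs_nbhs; split.
Qed.


Lemma derive_transl {m} (c v y : 'rV[R]_m) : derive (fun u => u + c) y v = v.
Proof.
have -> : (fun u => u + c) = id + cst c by [].
by rewrite deriveD // derive_id derive_cst addr0.
Qed.


Lemma transl_diff {m} (c y : 'rV[R]_m) : differentiable (fun u : 'rV[R]_m => u + c) y.
Proof. exact: (@Ck_diff _ _ 0 setT _ y (Ck_transl 0 setT c openT) I). Qed.

End Calc.

Section Fine.
Context {R : realType} {L : lmodType R}.

Lemma fine_loc {n} {U : set 'rV[R]_n} {Q Q' : 'rV[R]_n -> L} :
  fine_plot U Q -> (forall u, U u -> Q u = Q' u) -> fine_plot U Q'.
Proof.
move=> HQ e E hE; case: (hE) => [[_ [Hloc _]] _ _].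
apply: (Hloc _ _ Q); first exact: HQ.
move=> u /set_mem Uu; exact: e.
Qed.

Lemma fine_cst {n} {U : set 'rV[R]_n} (c : L) : open U -> fine_plot U (fun _ => c).
Proof. by move=> oU E [[_ [_ [Hc _]]] _ _]; apply: Hc. Qed.

Lemma fine_add {n} {U : set 'rV[R]_n} {Q1 Q2 : 'rV[R]_n -> L} :
  fine_plot U Q1 -> fine_plot U Q2 -> fine_plot U (fun u => Q1 u + Q2 u).
Proof. by move=> H1 H2 E hE; case: (hE) => _ Ha _; apply: Ha; [apply: H1|apply: H2]. Qed.

Lemma fine_scale {n} {U : set 'rV[R]_n} {r : 'rV[R]_n -> R} {Q : 'rV[R]_n -> L} :
  smooth_on U r -> fine_plot U Q -> fine_plot U (fun u => r u *: Q u).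
Proof. by move=> Hr H E hE; case: (hE) => _ _ Hs; apply: Hs => //; apply: H. Qed.

Lemma fine_sheaf n (U : set 'rV[R]_n) (Q : 'rV[R]_n -> L) : open U ->
  (forall u, U u -> exists W : set 'rV[R]_n, [/\ open W, W u, W `<=` U & fine_plot W Q]) ->
  fine_plot U Q.
Proof.
move=> oU H E hE; case: (hE) => [[_ [_ [_ [_ Hsh]]]] _ _]; apply: Hsh => // u Uu.
by have [W [oW Wu WU HW]] := H u Uu; exists W; split => //; apply: HW.
Qed.

Lemma fine_sum n (U : set 'rV[R]_n) p (F : 'I_p -> 'rV[R]_n -> L) :
  open U -> (forall i, fine_plot U (F i)) -> fine_plot U (fun u => \sum_(i < p) F i u).
Proof.
move=> oU; elim: p F => [|p IH] F HF.
  under eq_fun do rewrite big_ord0. exact: fine_cst.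
under eq_fun do rewrite big_ord_recr /=.
apply: fine_add => //.
exact: (IH (fun i => F (widen_ord (leqnSn p) i))).
Qed.

End Fine.

Lemma lin_sum {R : realType} {A B : lmodType R} (h : A -> B) p (a : 'I_p -> R) (v : 'I_p -> A) :
  is_linear_map h -> h (\sum_(i < p) a i *: v i) = \sum_(i < p) a i *: h (v i).
Proof.
move=> hl.
have h0 : h 0 = 0.
  have e := hl 1 0 0; rewrite !scale1r addr0 in e.
  by apply: (addrI (h 0)); rewrite addr0 -e.
have hD : forall u w, h (u + w) = h u + h w by move=> u w; rewrite -[u]scale1r hl !scale1r.
have hZ : forall c u, h (c *: u) = c *: h u by move=> c u; rewrite -[c *: u]addr0 hl h0 addr0.
elim: p a v => [|p IH] a v; first by rewrite !big_ord0.
by rewrite !big_ord_recr /= hD hZ IH.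
Qed.

Section Main.
Context {R : realType} {X : Type} (D : pdiff R X) (x : X) (T : X -> lmodType R)
  (iota : forall y : X, forall o : gobj R X, 'rV[R]_(gdim o) -> T y).

Definition compx (s : tbundle T) : T x :=
  match pselect (projT1 s = x) with
  | left e => eq_rect _ T (projT2 s) _ e
  | right _ => 0
  end.

Lemma eq_rect_gen (y z : X) (e : y = z) (F : forall y, T y) : eq_rect y T (F y) z e = F z.
Proof. by case: z / e. Qed.

Lemma eq_rect_scale (y z : X) (e : y = z) r (a : T y) :
  eq_rect y T (r *: a) z e = r *: eq_rect y T a z e.
Proof. by case: z / e. Qed.

Lemma eq_rect_zero (y z : X) (e : y = z) : eq_rect y T 0 z e = 0.
Proof. by case: z / e. Qed.

Lemma compx_dep (F : forall y, T y) y : y = x -> compx (existT T y (F y)) = F x.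
Proof.
move=> e; rewrite /compx /=; case: pselect => [e'|/(_ e) //].
exact: eq_rect_gen.
Qed.

Lemma compx_x t : compx (existT T x t) = t.
Proof.
rewrite /compx /=; case: pselect => [e|] //.
by rewrite (Prop_irrelevance e erefl).
Qed.

Lemma projT1_tadd (s t : tbundle T) : projT1 (tadd s t) = projT1 s.
Proof. by rewrite /tadd; case: pselect. Qed.

Lemma compx_tadd (s t : tbundle T) : projT1 s = x -> projT1 t = x -> compx (tadd s t) = compx s + compx t.
Proof.
case: s => ys a; case: t => yt b /= es et; subst ys yt.
rewrite /tadd /=; case: pselect => [e|] //.
by rewrite (Prop_irrelevance e erefl) /= !compx_x.
Qed.

Lemma compx_scale r (s : tbundle T) : compx (tscale r s) = r *: compx s.
Proof.
case: s => y a; rewrite /tscale /compx /=; case: pselect => [e|_].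
  exact: eq_rect_scale.
by rewrite scaler0.
Qed.

Lemma compx_zero y : compx (existT T y 0) = 0.
Proof.
rewrite /compx /=; case: pselect => [e|] //.
exact: eq_rect_zero.
Qed.

Lemma tadd_x (a b : T x) : tadd (existT T x a) (existT T x b) = existT T x (a + b).
Proof.
rewrite /tadd /=; case: pselect => [e|] //.
by rewrite (Prop_irrelevance e erefl).
Qed.


Hypothesis hD : is_diffeology D.

Definition E0 : pdiff R (tbundle T) := fun n U P => open U /\ D n U (fun u => projT1 (P u)).

Lemma E0_diffeo : is_diffeology E0.
Proof.
case: hD => [hopen [hloc [hcst [hcomp hsheaf]]]].
split; first by move=> n U P [].
split.
  move=> n U p q [oU Dp] e; split => //; apply: (hloc _ _ _ _ Dp).
  by move=> u Uu /=; rewrite e.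
split; first by move=> n U c oU; split => //; apply: hcst.
split.
  move=> n m U V p f [oU Dp] oV sf im; split => //.
  exact: (hcomp _ _ _ _ _ _ Dp oV sf im).
move=> n U p oU H; split => //; apply: hsheaf => // u Uu.
by have [W [oW Wu WU [_ DW]]] := H u Uu; exists W; split.
Qed.

Lemma E0_dvs : is_dvs_over D E0.
Proof.
case: hD => [hopen _].
split; first exact: E0_diffeo.
- by move=> n U P [].
- move=> n U P1 P2 [oU D1] _ _; split => //.
  by under eq_fun do rewrite projT1_tadd.
- by move=> n U r P _ [].
- by move=> n U p Dp; split => //; apply: hopen Dp.
Qed.

Lemma E0_hector : contains_hector D iota E0.
Proof.
case: hD => [_ [_ [_ [hcomp _]]]].
move=> n U f oU cU Df k V a b oV sa sb im; split => //.
exact: (hcomp _ _ _ _ _ _ Df oV sa im).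
Qed.

Lemma dvs_open n (U : set 'rV[R]_n) P : dvs_plot D iota U P -> open U.
Proof. by move=> H; case: (H _ E0_dvs E0_hector). Qed.

Lemma tdvs_vs : is_vs_diffeology (@tdvs_plot R X D T iota x).
Proof.
split; first split.
- move=> n U Q H; exact: dvs_open H.
split.
  move=> n U Q1 Q2 H e E hE hH; case: (hE) => [[_ [Eloc _]] _ _ _ _].
  apply: (Eloc _ _ _ _ (H E hE hH)) => u Uu /=; by rewrite e.
split.
  move=> n U c oU E hE hH; case: (hE) => [[_ [_ [Ecst _]]] _ _ _ _].
  exact: Ecst.
split.
  move=> n m U V p f H oV sf im E hE hH; case: (hE) => [[_ [_ [_ [Ecomp _]]]] _ _ _ _].
  exact: (Ecomp _ _ _ _ _ _ (H E hE hH) oV sf im).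
- move=> n U p oU H E hE hH; case: (hE) => [[_ [_ [_ [_ Esh]]]] _ _ _ _].
  apply: Esh => // u Uu; have [W [oW Wu WU HW]] := H u Uu.
  by exists W; split => //; apply: HW.
- move=> n U Q1 Q2 H1 H2 E hE hH; case: (hE) => [[_ [Eloc _]] _ Eadd _ _].
  have := Eadd _ _ _ _ (H1 E hE hH) (H2 E hE hH) (fun _ _ => erefl).
  move/Eloc; apply => u Uu /=; exact: tadd_x.
- move=> n U r Q sr H E hE hH; case: (hE) => [_ _ _ Esc _].
  exact: (Esc _ _ _ _ sr (H E hE hH)).
Qed.

Lemma fine_tdvs n (U : set 'rV[R]_n) Q : fine_plot U Q -> @tdvs_plot R X D T iota x n U Q.
Proof. by move=> H; apply: H; exact: tdvs_vs. Qed.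


Lemma smooth_comp_row {m n p} {U : set 'rV[R]_n} {V : set 'rV[R]_m}
    {f : 'rV[R]_n -> 'rV[R]_p} {g : 'rV[R]_m -> 'rV[R]_n} :
  open V -> open U -> (forall v, V v -> U (g v)) -> smooth_on U f -> smooth_on V g ->
  smooth_on V (f \o g).
Proof.
move=> oV oU im /smoothP sf /smoothP sg; apply/smoothP => k.
exact: (Ck_comp_row k U V f g oV oU im (sf k) (sg k)).
Qed.

Lemma smooth_comp {m n} {U : set 'rV[R]_n} {V : set 'rV[R]_m}
    {f : 'rV[R]_n -> R} {g : 'rV[R]_m -> 'rV[R]_n} :
  open V -> (forall v, V v -> U (g v)) -> smooth_on U f -> smooth_on V g ->
  smooth_on V (f \o g).
Proof.
move=> oV im /smoothP sf /smoothP sg; apply/smoothP => k.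
exact: (Ck_comp oV im (sf k) (sg k)).
Qed.

Lemma smooth_sub {m} {W : normedModType R} (V V' : set 'rV[R]_m) (g : 'rV[R]_m -> W) :
  V' `<=` V -> smooth_on V g -> smooth_on V' g.
Proof. by move=> HV H vs y /HV; apply: H. Qed.

Lemma smooth_diff {m} {W : normedModType R} (V : set 'rV[R]_m) (g : 'rV[R]_m -> W) y :
  smooth_on V g -> V y -> differentiable g y.
Proof. by move=> H; apply: (H [::]). Qed.

Definition FIB n (U : set 'rV[R]_n) (P : 'rV[R]_n -> tbundle T) : Prop :=
  forall m (V : set 'rV[R]_m) (g : 'rV[R]_m -> 'rV[R]_n), open V -> smooth_on V g ->
    (forall v, V v -> U (g v)) -> (forall v, V v -> projT1 (P (g v)) = x) ->
    fine_plot V (fun v => compx (P (g v))).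

Definition E1 : pdiff R (tbundle T) :=
  fun n U P => [/\ open U, D n U (fun u => projT1 (P u)) & FIB n U P].

Lemma E1_diffeo : is_diffeology E1.
Proof.
case: hD => [hopen [hloc [hcst [hcomp hsheaf]]]].
split; first by move=> n U P [].
split.
  move=> n U p q [oU Dp Fp] e; split => //.
    by apply: (hloc _ _ _ _ Dp) => u Uu /=; rewrite e.
  move=> m V g oV sg im hx.
  have e' : forall v, V v -> p (g v) = q (g v).
    by move=> v Vv; apply: e; apply: mem_set; apply: im.
  apply: (fine_loc (Q := fun v => compx (p (g v)))).
    by apply: Fp => // v Vv; rewrite e' //; apply: hx.
  by move=> v Vv; rewrite e'.
split.
  move=> n U c oU; split => //; first by apply: hcst.
  by move=> m V g oV _ _ _; apply: fine_cst.
split.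
  move=> n m U V p f [oU Dp Fp] oV sf im; split => //.
    exact: (hcomp _ _ _ _ _ _ Dp oV sf im).
  move=> m' V' g oV' sg im' hx.
  apply: (Fp _ _ (f \o g)) => //.
    exact: (smooth_comp_row oV' oV im').
  by move=> v Vv; apply: im; exists (g v) => //; apply: im'.
move=> n U p oU H; split => //.
  apply: hsheaf => // u Uu.
  by have [W [oW Wu WU [_ DW _]]] := H u Uu; exists W; split.
move=> m V g oV sg im hx; apply: fine_sheaf => // v Vv.
have [W [oW Wgv WU [_ _ FW]]] := H (g v) (im v Vv).
exists (V `&` g @^-1` W); split => //.
- apply: open_preim => // y Vy; exact: smooth_diff sg Vy.
apply: FW.
- apply: open_preim => // y Vy; exact: smooth_diff sg Vy.
- by apply: smooth_sub sg => y [].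
- by move=> y [_ Wy].
- by move=> y [Vy _]; apply: hx.
Qed.


Lemma E1_dvs : is_dvs_over D E1.
Proof.
case: hD => [hopen _].
split; first exact: E1_diffeo.
- by move=> n U P [].
- move=> n U P1 P2 [oU D1 F1] [_ D2 F2] eP; split => //.
    by under eq_fun do rewrite projT1_tadd.
  move=> m V g oV sg im hx.
  have h1 : forall v, V v -> projT1 (P1 (g v)) = x.
    by move=> v Vv; rewrite -(hx v Vv) projT1_tadd.
  have h2 : forall v, V v -> projT1 (P2 (g v)) = x.
    by move=> v Vv; rewrite -eP; [apply: h1|apply: im].
  apply: (fine_loc (fine_add (F1 _ _ _ oV sg im h1) (F2 _ _ _ oV sg im h2))).
  by move=> v Vv /=; rewrite compx_tadd //; [apply: h1|apply: h2].
- move=> n U r P sr [oU Dp Fp]; split => //.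
  move=> m V g oV sg im hx.
  have Hs : smooth_on V (r \o g) by exact: (smooth_comp oV im sr sg).
  apply: (fine_loc (fine_scale Hs (Fp _ _ _ oV sg im hx))).
  by move=> v Vv /=; rewrite compx_scale.
- move=> n U p Dp; split => //; first by apply: hopen Dp.
  move=> m V g oV sg im hx.
  apply: (fine_loc (fine_cst 0 oV)).
  by move=> v Vv /=; rewrite compx_zero.
Qed.


Hypothesis htan : forall y, is_internal_tangent D y (iota y).
Context (G : set (gobj R X)).
Hypothesis hGgen : is_local_generating_set D x G.
Hypothesis hGlc : forall q : gobj R X, G q ->
       forall (m : nat) (V : set 'rV[R]_m) (f : 'rV[R]_m -> 'rV[R]_(gdim q)),
         open V -> smooth_on V f -> f @` V `<=` gdom q ->
         (forall v, V v -> gmap q (f v) = x) ->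
         locally_constant_on V f.

Lemma smooth_transl {m} (V : set 'rV[R]_m) (c : 'rV[R]_m) : open V -> smooth_on V (fun w => w + c).
Proof. by move=> oV; apply/smoothP => k; apply: Ck_transl. Qed.

Lemma shift_gobj n (U : set 'rV[R]_n) f u : open U -> connected U -> D n U f -> U u -> f u = x ->
  is_gobj D x (shift_obj U f u).
Proof.
case: hD => [_ [_ [_ [hcomp _]]]].
move=> oU cU Df Uu fu; split => /=.
- exact: open_transl.
- exact: connected_transl.
- by rewrite add0r.
- apply: (hcomp _ _ _ _ _ (fun w => w + u) Df); first exact: open_transl.
    by apply: smooth_transl; apply: open_transl.
  by move=> _ [w Uw <-].
- by rewrite add0r.
Qed.


Lemma hector_core n (U : set 'rV[R]_n) f k (V : set 'rV[R]_k) (a b : 'rV[R]_k -> 'rV[R]_n) :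
  open U -> connected U -> D n U f -> open V -> smooth_on V a -> smooth_on V b ->
  (forall w, V w -> U (a w)) -> (forall w, V w -> f (a w) = x) ->
  fine_plot V (fun w => iota x (shift_obj U f (a w)) (b w)).
Proof.
move=> oU cU Df oV sa sb im hx.
apply: fine_sheaf => // w0 Vw0.
have gp0 := @shift_gobj n U f (a w0) oU cU Df (im w0 Vw0) (hx w0 Vw0).
case: hGgen => hGo hGm.
have [q [W0 [h0 [Gq hom]]]] := hGm _ gp0.
case: hom => oW0 [W00 [W0U [sh0 [h00 [h0im h0eq]]]]].
simpl in *.
pose c := fun w => a w - a w0.
have sc : smooth_on V c.
  apply/smoothP => k'; apply: Ck_add => //; last exact: Ck_cst.
  by move: sa => /smoothP.
pose V1 := V `&` c @^-1` W0.
have oV1 : open V1 by apply: open_preim => // y Vy; apply: smooth_diff sc Vy.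
have V1w0 : V1 w0 by split => //; rewrite /c /= subrr.
have im1 : forall w, V1 w -> W0 (c w) by move=> w [].
have sk : smooth_on V1 (h0 \o c).
  apply: (smooth_comp_row oV1 oW0 im1 sh0); apply: smooth_sub sc; by move=> y [].
have lc : locally_constant_on V1 (h0 \o c).
  apply: (@hGlc q Gq _ V1 (h0 \o c) oV1 sk).
    by move=> _ [w V1w <-]; apply: h0im; exists (c w) => //; apply: im1.
  move=> w [Vw W0cw] /=; rewrite -h0eq // /c subrK; exact: hx.
have [V2 [oV2 V2w0 V21 hV2]] := lc w0 V1w0.
have hk0 : forall w, V2 w -> h0 (c w) = 0.
  by move=> w V2w; have := hV2 w V2w; rewrite /= /c subrr h00.
exists V2; split => //.
  by move=> y /V21 [].
have [[hlin hmor] _] := htan x.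
pose r (i : 'I_(gdim q)) := fun w => (derive h0 (c w) (b w)) 0 i.
have eqw : forall w, V2 w -> \sum_(i < gdim q) r i w *: iota x q (delta_mx 0 i) =
    iota x (shift_obj U f (a w)) (b w).
  move=> w V2w; have [Vw W0cw] := V21 w V2w.
  have gpw := @shift_gobj n U f (a w) oU cU Df (im w Vw) (hx w Vw).
  pose Ww := [set u | W0 (u + c w)].
  have oWw : open Ww := open_transl W0 (c w) oW0.
  have hom : is_ghom (shift_obj U f (a w)) q Ww (fun u => h0 (u + c w)).
    split => //; split; first by rewrite /Ww /= add0r.
    split; first by move=> u /= Wu; have := W0U _ Wu; rewrite /= /c -addrA subrK.
    split; first exact: (smooth_comp_row oWw oW0 (fun u Wu => Wu) sh0 (smooth_transl Ww (c w) oWw)).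
    split; first by rewrite /= add0r hk0.
    split; first by move=> _ [u Wu <-]; apply: h0im; exists (u + c w).
    by move=> u Wu /=; rewrite -h0eq // /c -addrA subrK.
  rewrite -(hmor _ _ _ _ gpw (hGo q Gq) hom (b w)).
  have -> : derive (fun u => h0 (u + c w)) 0 (b w) = derive h0 (c w) (b w).
    have -> : (fun u => h0 (u + c w)) = h0 \o (fun u => u + c w) by [].
    rewrite derive_comp.
    - by rewrite derive_transl add0r.
    - exact: transl_diff.
    - by rewrite add0r; apply: smooth_diff sh0 W0cw.
  rewrite [in RHS](row_sum_delta (derive h0 (c w) (b w))) lin_sum //.
  exact: hlin _ (hGo q Gq).
have sr : forall i, smooth_on V2 (r i).
  move=> i; apply/smoothP => k'.
  have Hs : Ck k' V2 (fun w => \sum_(j < n) (b w 0 j) * ((Dv (delta_mx 0 j) h0 \o c) w 0 i)).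
    apply: Ck_sum => // j; apply: Ck_mul => //.
      apply: Ck_coord => //; apply: (Ck_sub k' V V2 b); first by move=> y /V21 [].
      exact: (proj1 (smoothP V b) sb k').
    apply: Ck_coord => //.
    apply: (Ck_comp_row k' W0 V2 (Dv (delta_mx 0 j) h0) c oV2 oW0).
    - by move=> y /V21 [].
    - exact: (proj2 (proj1 (smoothP W0 h0) sh0 k'.+1) (delta_mx 0 j)).
    - apply: (Ck_sub k' V V2 c); first by move=> y /V21 [].
      exact: (proj1 (smoothP V c) sc k').
  apply: (Ck_loc oV2 _ Hs) => w V2w /=.
  have [Vw W0cw] := V21 w V2w.
  rewrite /r (derive_decomp h0 (c w) (b w)); last exact: smooth_diff sh0 W0cw.
  rewrite summxE; by apply: eq_bigr => j _; rewrite mxE.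
apply: (fine_loc _ eqw).
apply: fine_sum => // i.
apply: fine_scale; first exact: sr.
exact: fine_cst.
Qed.


Lemma E1_hector : contains_hector D iota E1.
Proof.
case: hD => [_ [_ [_ [hcomp _]]]].
move=> n U f oU cU Df k V a b oV sa sb im; split => //.
  exact: (hcomp _ _ _ _ _ _ Df oV sa im).
move=> m V' g oV' sg im' hx'.
have ima : forall v, V v -> U (a v) by move=> v Vv; apply: im; exists v.
have H := @hector_core n U f m V' (a \o g) (b \o g) oU cU Df oV' (smooth_comp_row oV' oV im' sa sg)
  (smooth_comp_row oV' oV im' sb sg) (fun v Vv => ima _ (im' v Vv)) hx'.
apply: (fine_loc H) => v Vv /=.
rewrite /tmap (compx_dep (fun y => iota y (shift_obj U f (a (g v))) (b (g v)))) //.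
exact: hx'.
Qed.

Lemma main_fine : is_fine (@tdvs_plot R X D T iota x).
Proof.
move=> n U Q; split; last exact: fine_tdvs.
move=> H; have [oU _ F] := H E1 E1_dvs E1_hector.
have sid : smooth_on U (fun u : 'rV[R]_n => u) by apply/smoothP => k; exact: Ck_id.
have := F n U (fun u => u) oU sid (fun v Vv => Vv) (fun _ _ => erefl).
move=> HF; apply: (fine_loc HF) => u Uu /=; by rewrite compx_x.
Qed.

End Main.

Theorem proposition4p18 (R : realType) (X : Type) (D : pdiff R X) (x : X)
    (T : X -> lmodType R)
    (iota : forall y : X, forall o : gobj R X, 'rV[R]_(gdim o) -> T y) :
  is_diffeology D ->
  (forall y : X, is_internal_tangent D y (iota y)) ->
  (exists G : set (gobj R X),
     is_local_generating_set D x G /\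
     forall q : gobj R X, G q ->
       forall (m : nat) (V : set 'rV[R]_m) (f : 'rV[R]_m -> 'rV[R]_(gdim q)),
         open V -> smooth_on V f -> f @` V `<=` gdom q ->
         (forall v, V v -> gmap q (f v) = x) ->
         locally_constant_on V f) ->
  is_fine (@tdvs_plot R X D T iota x).
Proof.
move=> hD htan [G [hgen hlc]].
exact: (@main_fine R X D x T iota hD htan G hgen hlc).
Qed.
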